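(* Let $H=(V,E)$ be a finite hypergraph with vertices $V=\{v_1,\dots,v_n\}$ and hyperedges $E=\{e_1,\dots,e_m\}$, and let $\Omega$ be the nilpotent adjacency matrix of $H$ (defined in the context). Let $k\in\mathbb{N}$, $k\ge 1$. (1) For $1\le i\ne j\le n$, $$\zeta_i\,(\Omega^k)_{ij}=\sum_{\substack{I\subseteq [n]\\ |I|=k+1}}\ \sum_{J\subseteq[m]}\omega_{I,J}\,\zeta_I\,\varepsilon_J,$$ where $\omega_{I,J}$ is the number of $k$-paths from $v_i$ to $v_j$ in $H$ whose vertex set is $\{v_t: t\in I\}$ and whose set of hyperedges is $\{e_\ell:\ell\in J\}$. (2) For $1\le i\le n$ and $k\ge 2$, $$(\Omega^k)_{ii}=\sum_{\substack{I\subseteq [n]\\ |I|=k}}\ \sum_{J\subseteq[m]}\omega_{I,J}\,\zeta_I\,\varepsilon_J,$$ where $\omega_{I,J}$ is the number of $k$-cycles in $H$ based at $v_i$ whose vertex set is $\{v_t: t\in I\}$ and whose set of hyperedges is $\{e_\ell:\ell\in J\}$.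
   Context: Algebras: $\mathfrak{Z}_n$ (the $n$-particle zeon algebra) is the commutative real algebra with unit generated by $\zeta_1,\dots,\zeta_n$ subject to $\zeta_i\zeta_j=\zeta_j\zeta_i$ and $\zeta_i^2=0$; for $I\subseteq[n]$, $\zeta_I=\prod_{i\in I}\zeta_i$ ($\zeta_\emptyset=1$), and $\{\zeta_I: I\subseteq[n]\}$ is a basis. $\mathfrak{I}_m$ (the idem-Clifford algebra) is the commutative real algebra with unit generated by $\varepsilon_1,\dots,\varepsilon_m$ subject to $\varepsilon_i\varepsilon_j=\varepsilon_j\varepsilon_i$ and $\varepsilon_i^2=\varepsilon_i$; $\varepsilon_J=\prod_{\ell\in J}\varepsilon_\ell$, and $\{\varepsilon_J\}$ is a basis. Computations take place in the commutative algebra $\mathfrak{Z}_n\otimes\mathfrak{I}_m$, with basis $\{\zeta_I\varepsilon_J\}$. Hypergraph: a hypergraph $H=(V,E)$ is a finite set $V$ with a set $E$ of nonempty subsets of $V$ (hyperedges). Its incidence matrix $C$ is the $n\times m$ matrix with $C_{i\ell}=1$ if $v_i\in e_\ell$ and $0$ otherwise. The nilpotent adjacency matrix of $H$ is $\Omega=XZ$, where $X=C\,\mathrm{diag}(\varepsilon_1,\dots,\varepsilon_m)$ ($n\times m$) and $Z=C^T\mathrm{diag}(\zeta_1,\dots,\zeta_n)$ ($m\times n$); explicitly, for all $i,j$ (including $i=j$), $\Omega_{ij}=\zeta_j\sum_{\ell:\ v_i\in e_\ell,\ v_j\in e_\ell}\varepsilon_\ell$. Walks: a $k$-walk in $H$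 is a sequence $(u_0,f_1,u_1,\dots,f_k,u_k)$ with $u_t\in V$, $f_t\in E$ and $u_{t-1},u_t\in f_t$ for $1\le t\le k$; its vertex set is $\{u_0,\dots,u_k\}$ and its hyperedge set is $\{f_1,\dots,f_k\}$. A $k$-path from $v_i$ to $v_j$ is a $k$-walk with $u_0=v_i$, $u_k=v_j$ and $u_0,\dots,u_k$ pairwise distinct. A $k$-cycle based at $v_i$ is a $k$-walk with $u_0=u_k=v_i$ and $u_0,\dots,u_{k-1}$ pairwise distinct (its vertex set is $\{u_0,\dots,u_{k-1}\}$). *)

(* Defs.v *)
From HB Require Import structures.
From mathcomp Require Import all_boot all_order all_algebra.
From mathcomp Require Import reals.
Set Implicit Arguments. Unset Strict Implicit. Unset Printing Implicit Defensive.
Import Order.TTheory GRing.Theory Num.Theory.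
Local Open Scope ring_scope.

(* A hypergraph on vertices v_0..v_{n-1} (type 'I_n) with hyperedges
   e_0..e_{m-1} given by  e : 'I_m -> {set 'I_n}: distinct nonempty subsets. *)
Definition is_hypergraph (n m : nat) (e : 'I_m -> {set 'I_n}) : Prop :=
  injective e /\ (forall l, e l != set0).

(* Generators zeta_i (zeta_i^2 = 0) and eps_l (eps_l^2 = eps_l) in the
   commutative real algebra A, such that {zeta_I eps_J} is a basis of A,
   i.e. A is (isomorphic to) Z_n (x) I_m. *)
Definition zetaI (R : realType) (A : comAlgType R) (n : nat)
  (z : 'I_n -> A) (I : {set 'I_n}) : A := \prod_(i in I) z i.
Definition epsJ (R : realType) (A : comAlgType R) (m : nat)
  (eps : 'I_m -> A) (J : {set 'I_m}) : A := \prod_(l in J) eps l.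

Definition is_zeon_idem_algebra (R : realType) (A : comAlgType R) (n m : nat)
  (z : 'I_n -> A) (eps : 'I_m -> A) : Prop :=
  [/\ forall i, z i * z i = 0,
      forall l, eps l * eps l = eps l,
      forall c : {set 'I_n} -> {set 'I_m} -> R,
        \sum_(I : {set 'I_n}) \sum_(J : {set 'I_m})
           c I J *: (zetaI z I * epsJ eps J) = 0 ->
        forall I J, c I J = 0
    &
      forall a : A, exists c : {set 'I_n} -> {set 'I_m} -> R,
        a = \sum_(I : {set 'I_n}) \sum_(J : {set 'I_m})
              c I J *: (zetaI z I * epsJ eps J)].

(* X = C diag(eps),  Z = C^T diag(zeta),  Omega = X Z. *)
Definition Xmat (R : realType) (A : comAlgType R) (n m : nat)
  (e : 'I_m -> {set 'I_n}) (eps : 'I_m -> A) : 'M[A]_(n, m) :=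
  \matrix_(i < n, l < m) ((i \in e l)%:R * eps l).
Definition Zmat (R : realType) (A : comAlgType R) (n m : nat)
  (e : 'I_m -> {set 'I_n}) (z : 'I_n -> A) : 'M[A]_(m, n) :=
  \matrix_(l < m, j < n) ((j \in e l)%:R * z j).
Definition nil_adj (R : realType) (A : comAlgType R) (n m : nat)
  (e : 'I_m -> {set 'I_n}) (z : 'I_n -> A) (eps : 'I_m -> A) : 'M[A]_n :=
  Xmat e eps *m Zmat e z.

(* A k-walk (u_0, f_1, u_1, ..., f_k, u_k): u : 'I_(k+1) -> V, f : 'I_k -> E,
   where f t (0-indexed) is the hyperedge f_{t+1} joining u_t and u_{t+1}. *)
Definition walk_type (n m k : nat) : finType :=
  ({ffun 'I_k.+1 -> 'I_n} * {ffun 'I_k -> 'I_m})%type.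

Definition is_walk (n m k : nat) (e : 'I_m -> {set 'I_n})
  (w : walk_type n m k) : bool :=
  [forall t : 'I_k,
     (w.1 (widen_ord (leqnSn k) t) \in e (w.2 t)) &&
     (w.1 (lift ord0 t) \in e (w.2 t))].

Definition walk_vset (n m k : nat) (w : walk_type n m k) : {set 'I_n} :=
  [set w.1 t | t : 'I_k.+1].
Definition walk_eset (n m k : nat) (w : walk_type n m k) : {set 'I_m} :=
  [set w.2 t | t : 'I_k].

Definition is_path (n m k : nat) (e : 'I_m -> {set 'I_n}) (i j : 'I_n)
  (w : walk_type n m k) : bool :=
  [&& is_walk e w, w.1 ord0 == i, w.1 ord_max == j & injectiveb w.1].

Definition is_cycle (n m k : nat) (e : 'I_m -> {set 'I_n}) (i : 'I_n)
  (w : walk_type n m k) : bool :=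
  [&& is_walk e w, w.1 ord0 == i, w.1 ord_max == i &
      [forall s : 'I_k.+1, forall t : 'I_k.+1,
         ((s < k)%N && (t < k)%N && (w.1 s == w.1 t)) ==> (s == t)]].

Definition cycle_vset (n m k : nat) (w : walk_type n m k) : {set 'I_n} :=
  [set w.1 t | t : 'I_k.+1 & (t < k)%N].

Definition omega_path (n m k : nat) (e : 'I_m -> {set 'I_n}) (i j : 'I_n)
  (I : {set 'I_n}) (J : {set 'I_m}) : nat :=
  #|[set w : walk_type n m k | [&& is_path e i j w,
        walk_vset w == I & walk_eset w == J]]|.

Definition omega_cycle (n m k : nat) (e : 'I_m -> {set 'I_n}) (i : 'I_n)
  (I : {set 'I_n}) (J : {set 'I_m}) : nat :=
  #|[set w : walk_type n m k | [&& is_cycle e i w,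
        cycle_vset w == I & walk_eset w == J]]|.

(* Main.v *)
Require Import Defs.
From HB Require Import structures.
From mathcomp Require Import all_boot all_order all_algebra.
From mathcomp Require Import reals zify.
Import GRing.Theory.
Set Implicit Arguments. Unset Strict Implicit. Unset Printing Implicit Defensive.
Local Open Scope ring_scope.

Section Walk.
Variable (Rg : comPzRingType) (n : nat).

Definition extf k (u : {ffun 'I_k.+1 -> 'I_n}) (b : 'I_n) : {ffun 'I_k.+2 -> 'I_n} :=
  [ffun s : 'I_k.+2 => if (s < k.+1)%N then u (inord s) else b].
Definition initf k (u : {ffun 'I_k.+2 -> 'I_n}) : {ffun 'I_k.+1 -> 'I_n} :=
  [ffun s => u (widen_ord (leqnSn k.+1) s)].

Lemma extf_widen k u b (s : 'I_k.+1) : extf u b (widen_ord (leqnSn _) s) = u s.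
Proof.
rewrite /extf ffunE /= ltn_ord; congr (u _); apply: val_inj; rewrite /= inordK //.
Qed.
Lemma extf_max k u b : extf (k:=k) u b ord_max = b.
Proof. by rewrite /extf ffunE /= ltnn. Qed.
Lemma extf_0 k u b : extf (k:=k) u b ord0 = u ord0.
Proof. rewrite /extf ffunE /=; congr (u _); apply: val_inj; rewrite /= inordK //. Qed.
Lemma extf_lift k (u : {ffun 'I_k.+1 -> 'I_n}) b (t : 'I_k) :
  extf u b (lift ord0 (widen_ord (leqnSn _) t)) = u (lift ord0 t).
Proof.
rewrite /extf ffunE /=; rewrite /bump /=.
have lt := ltn_ord t.
case: ifP => h; last by exfalso; move: h; rewrite /=; lia.
congr (u _); apply: val_inj; rewrite /= inordK // /bump /=.

Qed.

Lemma mxpow_walk (M : 'M[Rg]_n) k (i j : 'I_n) :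
  (M ^+ k) i j = \sum_(u : {ffun 'I_k.+1 -> 'I_n} | (u ord0 == i) && (u ord_max == j))
     \prod_(t < k) M (u (widen_ord (leqnSn k) t)) (u (lift ord0 t)).
Proof.
elim: k i j => [|k IH] i j.
  rewrite expr0 mxE.
  have E : forall u : {ffun 'I_1 -> 'I_n}, (u ord0 == i) && (u ord_max == j) =
     (i == j) && (u == [ffun => i]).
    move=> u; have -> : (ord_max : 'I_1) = ord0 by apply: val_inj.
    case: (i =P j) => [<-|ne] /=.
      rewrite andbb /=; apply/eqP/eqP => [ui|->]; last by rewrite ffunE.
      apply/ffunP => s; rewrite ffunE -ui; congr (u _).
      by apply: val_inj; case: s => [[]].
    by apply/negP => /andP [/eqP a /eqP b]; apply: ne; rewrite -a -b.
  rewrite (eq_bigl _ _ E); case: (i =P j) => [->|ne] /=.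
    by rewrite big_pred1_eq big_ord0.
  by rewrite big_pred0.
rewrite exprSr -mulmxE mxE.
under eq_bigr => a _ do rewrite IH big_distrl /=.
rewrite (exchange_big_dep (fun u : {ffun 'I_k.+1 -> 'I_n} => u ord0 == i)) /=; last by move=> a u _ /andP [].
under eq_bigr => u ui.
  rewrite (eq_bigl (fun a => a == u ord_max)); last by move=> a; rewrite /= ui eq_sym.
  rewrite big_pred1_eq.
  over.
rewrite (reindex (fun p : {ffun 'I_k.+1 -> 'I_n} * 'I_n => extf p.1 p.2)) /=; last first.
  exists (fun u => (initf u, u ord_max)) => [[u b] _|u _] /=.
    congr (_, _); last by rewrite extf_max.
    by apply/ffunP => s; rewrite ffunE extf_widen.
  apply/ffunP => s; rewrite /extf ffunE; case: ifP => h.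
    by rewrite ffunE; congr (u _); apply: val_inj; rewrite /= inordK.
  congr (u _); apply: val_inj => /=; apply/eqP; rewrite eqn_leq leq_ord /=.
  by rewrite leqNgt h.
rewrite (eq_bigl (fun p : {ffun 'I_k.+1 -> 'I_n} * 'I_n => (p.1 ord0 == i) && (p.2 == j))); last by move=> [u b]; rewrite /= extf_0 extf_max.
rewrite -(pair_big (fun u : {ffun 'I_k.+1 -> 'I_n} => u ord0 == i) (fun b => b == j)
  (fun u b => \prod_(t < k.+1) M (extf u b (widen_ord (leqnSn k.+1) t)) (extf u b (lift ord0 t)))) /=.
apply: eq_bigr => u _; rewrite big_pred1_eq big_ord_recr /=.
congr (_ * _).
  apply: eq_bigr => t _; congr (M _ _).
    by rewrite extf_widen.
  by rewrite extf_lift.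
congr (M _ _).
  by rewrite extf_widen.
have -> : lift ord0 (ord_max : 'I_k.+1) = ord_max :> 'I_k.+2 by apply: val_inj.
by rewrite extf_max.
Qed.
End Walk.

Lemma prod_indic (Rg : comPzSemiRingType) (I : finType) (P : pred I) :
  \prod_(t : I) ((P t)%:R : Rg) = ([forall t, P t])%:R.
Proof.
case: (boolP [forall t, P t]) => H.
  by rewrite big1 // => t _; rewrite (forallP H).
move: H; rewrite negb_forall => /existsP [t Ht].
by rewrite (bigD1 t) //= (negbTE Ht) mul0r.
Qed.

Section Alg.
Variables (Rg : comPzRingType) (n m : nat) (z : 'I_n -> Rg) (eps : 'I_m -> Rg).
Hypothesis zz : forall i, z i * z i = 0.
Hypothesis ee : forall l, eps l * eps l = eps l.

Lemma prod_z p (u : 'I_p -> 'I_n) :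
  \prod_(s : 'I_p) z (u s) = if injectiveb u then \prod_(x in [set u s | s : 'I_p]) z x else 0.
Proof.
case: injectiveP => inj.
  by rewrite big_imset //=; move=> a b _ _; apply: inj.
have [s [t [st ust]]] : exists s t, s != t /\ u s = u t.
  case: (boolP [exists s, exists t, (s != t) && (u s == u t)]).
    by move=> /existsP [s /existsP [t /andP [st /eqP ust]]]; exists s, t.
  rewrite negb_exists => /forallP H; exfalso; apply: inj => s t ust.
  move: (H s); rewrite negb_exists => /forallP /(_ t).
  by rewrite ust eqxx andbT negbK => /eqP.
rewrite (bigD1 s) //= (bigD1 t) 1?eq_sym //= mulrA -ust zz mul0r.
all: by [].

Qed.

Lemma eps_pow l k : eps l ^+ k.+1 = eps l.
Proof. by elim: k => [|k IH]; rewrite ?expr1 // exprS IH ee. Qed.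

Lemma prod_eps p (f : 'I_p -> 'I_m) :
  \prod_(t : 'I_p) eps (f t) = \prod_(l in [set f t | t : 'I_p]) eps l.
Proof.
rewrite (partition_big_imset f) /=.
apply: eq_bigr => l /imsetP [t _ ->].
rewrite (eq_bigr (fun _ => eps (f t))); last by move=> s /eqP ->.
rewrite -big_filter big_const_seq.
have : (0 < count predT [seq i <- index_enum 'I_p | f i == f t])%N.
  rewrite count_predT size_filter -has_count; apply/hasP; exists t => //.
  by rewrite mem_index_enum.
case: count => // k _.
elim: k => [|k IH]; first by rewrite /= mulr1.
by rewrite iterS IH ee.
Qed.
End Alg.

Section Cyc.
Variable n : nat.

Lemma lift0_inord k (t : 'I_k.+1) : lift ord0 t = inord t.+1 :> 'I_k.+2.
Proof. by apply: val_inj; rewrite /= inordK // ltnS. Qed.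

Lemma cyc_set k (U : {ffun 'I_k.+2 -> 'I_n}) : U ord0 = U ord_max ->
  [set U (lift ord0 t) | t : 'I_k.+1] = [set U t | t : 'I_k.+2 & (t < k.+1)%N].
Proof.
move=> U0; apply/setP => x; apply/imsetP/imsetP => [[t _ ->]|[s]].
  case: (ltnP t k) => h.
    by exists (lift ord0 t); rewrite // inE /= /bump /=; lia.
  exists ord0; first by rewrite inE.
  rewrite U0; congr (U _); apply: val_inj => /=.
  rewrite /bump /=; have := ltn_ord t; lia.
rewrite inE => hs ->.
case: (posnP s) => s0.
  exists ord_max => //; have -> : s = ord0 by apply: val_inj.
  by rewrite U0; congr (U _); apply: val_inj.
exists (inord s.-1) => //; congr (U _); apply: val_inj => /=.
rewrite /bump /= inordK; lia.
Qed.

Lemma cyc_inj k (U : {ffun 'I_k.+2 -> 'I_n}) : U ord0 = U ord_max ->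
  injectiveb (fun t : 'I_k.+1 => U (lift ord0 t)) =
  [forall s : 'I_k.+2, forall t : 'I_k.+2,
     ((s < k.+1)%N && (t < k.+1)%N && (U s == U t)) ==> (s == t)].
Proof.
move=> U0; apply/injectiveP/forallP => [inj s|H t1 t2 eq12].
  apply/forallP => t; apply/implyP => /andP [/andP [hs ht] /eqP ust].
  pose tau := fun x : 'I_k.+2 => (inord (if x == 0%N :> nat then k else x.-1) : 'I_k.+1).
  have vt : forall x : 'I_k.+2, (x < k.+1)%N -> U (lift ord0 (tau x)) = U x.
    move=> x hx; rewrite /tau; case: eqP => x0.
      have -> : x = ord0 by apply: val_inj.
      rewrite U0; congr (U _); apply: val_inj => /=; rewrite /bump /= inordK //.
    congr (U _); apply: val_inj => /=; rewrite /bump /= inordK; lia.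
  have := inj (tau s) (tau t); rewrite !vt // ust => /(_ erefl) /(congr1 val).
  rewrite /tau /= !inordK; try (case: eqP => _; lia).
  move=> h; apply/eqP; apply: val_inj => /=; move: h.
  by case: eqP => a; case: eqP => b; lia.
pose sig := fun x : 'I_k.+1 => (inord (if x == k :> nat then 0 else x.+1) : 'I_k.+2).
have vs : forall t0 : 'I_k.+1, U (sig t0) = U (lift ord0 t0) /\ (sig t0 < k.+1)%N.
  move=> t0; have := ltn_ord t0; rewrite /sig; case: eqP => tk lt.
    split; last by rewrite inordK.
    rewrite (_ : inord 0 = ord0); last by apply: val_inj; rewrite /= inordK.
    rewrite U0; congr (U _); apply: val_inj => /=; rewrite /bump /=; lia.
  rewrite inordK; last lia.
  split; last lia.
  congr (U _); apply: val_inj => /=; rewrite /bump /= inordK; lia.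
have [v1 l1] := vs t1; have [v2 l2] := vs t2.
have := forallP (H (sig t1)) (sig t2); rewrite l1 l2 v1 v2 eq12 eqxx /= => /eqP /(congr1 val).
rewrite /sig /= !inordK; try (case: eqP => _; have := ltn_ord t1; have := ltn_ord t2; lia).
move=> h; apply: val_inj => /=; move: h; have := ltn_ord t1; have := ltn_ord t2.
by case: eqP => a; case: eqP => b; lia.
Qed.
End Cyc.

Section Main.
Variables (R : realType) (A : comAlgType R) (n m : nat)
  (e : 'I_m -> {set 'I_n}) (z : 'I_n -> A) (eps : 'I_m -> A).
Hypothesis zz : forall i, z i * z i = 0.
Hypothesis ee : forall l, eps l * eps l = eps l.

Lemma nil_adjE a b : nil_adj e z eps a b =
  \sum_(l < m) ((a \in e l) && (b \in e l))%:R * (eps l * z b).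
Proof.
rewrite /nil_adj mxE; apply: eq_bigr => l _; rewrite /Xmat /Zmat !mxE.
by rewrite mulrACA -natrM mulnb.
Qed.

Lemma walk_exp k i j : (nil_adj e z eps ^+ k) i j =
  \sum_(w : walk_type n m k | (w.1 ord0 == i) && (w.1 ord_max == j))
    (is_walk e w)%:R * (epsJ eps (walk_eset w) * \prod_(t < k) z (w.1 (lift ord0 t))).
Proof.
rewrite mxpow_walk.
under eq_bigr => u _.
  rewrite (eq_bigr (fun t => \sum_(l < m) ((u (widen_ord (leqnSn k) t) \in e l) && (u (lift ord0 t) \in e l))%:R * (eps l * z (u (lift ord0 t)))));
    last by move=> t _; rewrite nil_adjE.
  rewrite bigA_distr_bigA /=.
  over.
rewrite pair_big_dep /=.
apply: eq_big => [[u f]|[u f] _] /=; first by rewrite andbT.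
rewrite big_split /= big_split /= prod_indic prod_eps //.
Qed.

Lemma card_mul (T : finType) (Q : pred T) (c : A) :
  (#|[set w | Q w]|)%:R * c = \sum_(w : T) (Q w)%:R * c.
Proof.
rewrite mulr_natl -sumr_const big_mkcond /=; apply: eq_bigr => w _.
by rewrite inE; case: (Q w); rewrite ?mul1r ?mul0r.
Qed.

Lemma collapse (T : finType) (Pw : T -> bool) (vs : T -> {set 'I_n})
  (es : T -> {set 'I_m}) (P : pred {set 'I_n}) (c : {set 'I_n} -> {set 'I_m} -> A) w :
  (Pw w -> P (vs w)) ->
  \sum_(I | P I) \sum_(J : {set 'I_m}) ([&& Pw w, vs w == I & es w == J])%:R * c I J =
  (Pw w)%:R * c (vs w) (es w).
Proof.
case: (Pw w) => /= [/(_ isT) Pv|_].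
  rewrite (bigD1 (vs w)) //= eqxx /= [X in _ + X]big1 ?addr0; last first.
    move=> I /andP [_ nI]; rewrite big1 // => J _.
    by rewrite (negbTE (_ : vs w != I)) ?mul0r // eq_sym.
  rewrite (bigD1 (es w)) //= eqxx [X in _ + X]big1 ?addr0 //.
  by move=> J nJ; rewrite eq_sym (negbTE nJ) mul0r.
by rewrite mul0r big1 // => I _; rewrite big1 // => J _; rewrite mul0r.
Qed.
End Main.


Theorem mainTheorem1 (R : realType) (A : comAlgType R) (n m : nat)
  (e : 'I_m -> {set 'I_n}) (z : 'I_n -> A) (eps : 'I_m -> A) :
  is_hypergraph e ->
  is_zeon_idem_algebra z eps ->
  (forall (k : nat) (i j : 'I_n), (1 <= k)%N -> i != j ->
     z i * (nil_adj e z eps ^+ k) i j =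
     \sum_(I : {set 'I_n} | #|I| == k.+1) \sum_(J : {set 'I_m})
        (omega_path k e i j I J)%:R * (zetaI z I * epsJ eps J))
  /\
  (forall (k : nat) (i : 'I_n), (2 <= k)%N ->
     (nil_adj e z eps ^+ k) i i =
     \sum_(I : {set 'I_n} | #|I| == k) \sum_(J : {set 'I_m})
        (omega_cycle k e i I J)%:R * (zetaI z I * epsJ eps J)).
Proof.
move=> _ [zz ee _ _]; split.
  move=> k i j k1 ij.
  rewrite (walk_exp e z ee) mulr_sumr.
  rewrite /omega_path; symmetry. under eq_bigr => I _ do under eq_bigr => J _ do rewrite card_mul.
  under eq_bigr => I _ do rewrite exchange_big.
  rewrite exchange_big /= [RHS]big_mkcond; symmetry; apply: eq_bigr => w _.
  rewrite (@collapse _ _ _ _ _ (is_path e i j) (@walk_vset n m k) (@walk_eset n m k)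
     _ (fun I J => zetaI z I * epsJ eps J)); last first.
    case/and4P => _ _ _ /injectiveP inj.
    by rewrite card_imset // card_ord.
  rewrite /is_path; case: (boolP ((w.1 ord0 == i) && (w.1 ord_max == j))) => [/andP [/eqP w0 /eqP wm]|H].
    rewrite w0 wm !eqxx /=.
    rewrite -w0 (mulrCA (z _)) (mulrCA (z _)) -(big_ord_recl _ (fun s => z (w.1 s))) (prod_z zz).
    by case: (is_walk e w); case: injectiveb; rewrite ?mul1r ?mul0r ?mulr0 // mulrC.
  by move: H; case: (w.1 ord0 == i); case: (w.1 ord_max == j); rewrite /= ?andbF ?mul0r.
move=> [//|[//|k]] i _.
rewrite (walk_exp e z ee).
rewrite /omega_cycle; symmetry. under eq_bigr => I _ do under eq_bigr => J _ do rewrite card_mul.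
under eq_bigr => I _ do rewrite exchange_big.
rewrite exchange_big /= [RHS]big_mkcond; symmetry; apply: eq_bigr => w _.
rewrite (@collapse _ _ _ _ _ (is_cycle e i) (@cycle_vset n m k.+2) (@walk_eset n m k.+2)
     _ (fun I J => zetaI z I * epsJ eps J)); last first.
  case/and4P => _ /eqP w0 /eqP wm cyc.
  rewrite /cycle_vset -cyc_set ?w0 ?wm // card_imset ?card_ord //.
  by apply/injectiveP; rewrite cyc_inj ?w0 ?wm.
rewrite /is_cycle; case: (boolP ((w.1 ord0 == i) && (w.1 ord_max == i))) => [/andP [/eqP w0 /eqP wm]|H].
  rewrite w0 wm !eqxx /= (prod_z zz (fun t : 'I_k.+2 => w.1 (lift ord0 t))).
  rewrite cyc_inj ?w0 ?wm // /cycle_vset -cyc_set ?w0 ?wm //.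
  by case: (is_walk e w); case: [forall _, _]; rewrite ?mul1r ?mul0r ?mulr0 // mulrC.
by move: H; case: (w.1 ord0 == i); case: (w.1 ord_max == i); rewrite /= ?andbF ?mul0r.
Qed.
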